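(* Let $G=(G_1,v_1,e_1)\Delta(G_2,v_2,e_2)$ be a Hajós join of two hypergraphs $G_1$ and $G_2$, and let $k\ge2$ be an integer. Then: (a) if both $G_1$ and $G_2$ are $(k+1)$-critical, then $G$ is $(k+1)$-critical; (b) if $G$ is $(k+1)$-critical and $k\ge3$, then both $G_1$ and $G_2$ are $(k+1)$-critical.
   Context: A hypergraph is a pair $G=(V,E)$ of finite sets with $E\subseteq 2^V$ and $|e|\ge2$ for all $e\in E$. A coloring requires every edge to contain two vertices of different colors; $\chi$ is the chromatic number. $G$ is $(k+1)$-critical if $\chi(G)=k+1$ but $\chi(H)\le k$ for every proper subhypergraph $H$. Hajós join $(G_1,v_1,e_1)\Delta(G_2,v_2,e_2)$: for vertex-disjoint hypergraphs $G_1,G_2$, $e_i\in E(G_i)$, $v_i\in e_i$, delete $e_1,e_2$, identify $v_1,v_2$ into a new vertex $v^*$, and add a new edge $e^*$ equal either to $(e_1\cup e_2)\setminus\{v_1,v_2\}$ or to $((e_1\cup e_2)\setminus\{v_1,v_2\})\cup\{v^*\}$. *)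

(* Defs.v *)
From mathcomp Require Import all_boot.
Local Open Scope nat_scope.
Set Implicit Arguments. Unset Strict Implicit. Unset Printing Implicit Defensive.

Definition hgraph (T : finType) := ({set T} * {set {set T}})%type.

Section Hyper.
Variable T : finType.

Definition is_hypergraph (G : hgraph T) : Prop :=
  (forall e, e \in G.2 -> e \subset G.1) /\ (forall e, e \in G.2 -> 2 <= #|e|).

Definition colorable (G : hgraph T) (k : nat) : Prop :=
  exists f : T -> nat,
    (forall x, x \in G.1 -> f x < k) /\
    (forall e, e \in G.2 -> exists x, exists y, [/\ x \in e, y \in e & f x != f y]).

Definition chi_eq (G : hgraph T) (n : nat) : Prop :=
  colorable G n /\ forall m, m < n -> ~ colorable G m.

Definition subhypergraph (H G : hgraph T) : Prop :=
  is_hypergraph H /\ H.1 \subset G.1 /\ H.2 \subset G.2.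

(* G is (k+1)-critical: chi(G) = k+1 and chi(H) <= k for every proper
   subhypergraph H (chi(H) <= k  <=>  H is k-colorable). *)
Definition critical (G : hgraph T) (k : nat) : Prop :=
  chi_eq G k.+1 /\
  forall H, subhypergraph H G -> H <> G -> colorable H k.

(* Hajós join.  v1 and v2 are identified into the new vertex vs
   (vs must not be another vertex of G1 or G2; vs = v1 is allowed).
   b = false : e* = (e1 ∪ e2) \ {v1,v2};  b = true : e* additionally contains vs. *)
Definition hajos_rename (v1 v2 vs : T) (x : T) : T :=
  if (x == v1) || (x == v2) then vs else x.

Definition hajos_join (G1 G2 : hgraph T) (v1 v2 vs : T) (e1 e2 : {set T})
    (b : bool) : hgraph T :=
  let r := hajos_rename v1 v2 vs in
  let estar0 := (e1 :|: e2) :\: [set v1; v2] in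
  let estar := if b then vs |: estar0 else estar0 in
  (vs |: ((G1.1 :\ v1) :|: (G2.1 :\ v2)),
   (fun e : {set T} => r @: e) @: (G1.2 :\ e1) :|: (fun e : {set T} => r @: e) @: (G2.2 :\ e2)
     :|: [set estar]).

Definition hajos_data (G1 G2 : hgraph T) (v1 v2 vs : T) (e1 e2 : {set T}) : Prop :=
  is_hypergraph G1 /\ is_hypergraph G2 /\ [disjoint G1.1 & G2.1] /\
  e1 \in G1.2 /\ e2 \in G2.2 /\ v1 \in e1 /\ v2 \in e2 /\
  vs \notin (G1.1 :\ v1) :|: (G2.1 :\ v2).

End Hyper.

(* Main.v *)
Require Import Defs.
From mathcomp Require Import all_boot zify.
Set Implicit Arguments. Unset Strict Implicit. Unset Printing Implicit Defensive.

Definition colors (T : finType) (f : T -> nat) (e : {set T}) :=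
  exists x y, [/\ x \in e, y \in e & f x != f y].

Lemma colorableE (T : finType) (G : hgraph T) k :
  colorable G k <-> exists f : T -> nat, (forall x, x \in G.1 -> f x < k) /\
     (forall e, e \in G.2 -> colors f e).
Proof. by []. Qed.

Lemma colors_ext (T : finType) (g g' : T -> nat) (e : {set T}) :
  (forall y, y \in e -> g y = g' y) -> colors g e -> colors g' e.
Proof.
move=> H [x [y [hx hy hxy]]]; exists x, y; split => //.
by rewrite -!H.
Qed.

Lemma colors_imset (T : finType) (d : T -> nat) (h : T -> T) (f : {set T}) :
  colors d (h @: f) <-> colors (fun y => d (h y)) f.
Proof.
split.
- move=> [x [y [/imsetP [x' hx' ->] /imsetP [y' hy' ->] hxy]]].
  by exists x', y'.
- move=> [x [y [hx hy hxy]]]; exists (h x), (h y); split => //; exact: imset_f.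
Qed.

Lemma not_colors (T : finType) (g : T -> nat) (e : {set T}) :
  ~ colors g e -> forall x y, x \in e -> y \in e -> g x = g y.
Proof.
move=> H x y hx hy; apply/eqP; apply/negPn/negP => hne; apply: H; by exists x, y.
Qed.

Lemma colorable_mono (T : finType) (G H : hgraph T) k k' :
  colorable G k -> H.1 \subset G.1 -> H.2 \subset G.2 -> k <= k' -> colorable H k'.
Proof.
move=> [f [hf1 hf2]] s1 s2 kk; exists f; split.
- move=> x /(subsetP s1) /hf1 h; exact: leq_trans h kk.
- by move=> e /(subsetP s2) /hf2.
Qed.

Definition tsw (a b x : nat) := if x == a then b else if x == b then a else x.

Lemma tswK a b : involutive (tsw a b).
Proof.
move=> x; rewrite /tsw.
case: (eqVneq x a) => [->|xa]; first by rewrite eqxx; case: eqVneq.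
case: (eqVneq x b) => [->|xb]; first by rewrite eqxx.
by rewrite (negbTE xa) (negbTE xb).
Qed.

Lemma tsw_inj a b : injective (tsw a b).
Proof. exact: inv_inj (tswK a b). Qed.

Lemma tsw_lt a b k x : a < k -> b < k -> x < k -> tsw a b x < k.
Proof. by rewrite /tsw => ha hb hx; case: ifP => _ //; case: ifP. Qed.

Lemma colors_comp (T : finType) (g : T -> nat) (h : nat -> nat) e :
  injective h -> colors g e -> colors (fun x => h (g x)) e.
Proof.
move=> hi [x [y [hx hy hxy]]]; exists x, y; split => //.
by rewrite (inj_eq hi).
Qed.

Lemma colorable_S (T : finType) (G : hgraph T) e k :
  is_hypergraph G -> e \in G.2 -> colorable (G.1, G.2 :\ e) k -> colorable G k.+1.
Proof.
move=> [hs hc] he [f [hf1 hf2]] /=.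
have : 0 < #|e| by apply: leq_trans (hc _ he).
case/card_gt0P => u hu.
exists (fun x => if x == u then k else f x); split.
- move=> x hx; case: ifP => _ //; exact: ltnW (hf1 _ hx).
- move=> e' he'.
  case: (boolP (u \in e')) => hue.
  + have : 1 < #|e'| by apply: hc.
    rewrite (cardsD1 u) hue add1n ltnS => /card_gt0P [w].
    rewrite !inE => /andP [wu we].
    exists u, w; rewrite eqxx (negbTE wu); split => //.
    by rewrite neq_ltn hf1 ?orbT // (subsetP (hs _ he')).
  + have he2 : e' \in G.2 :\ e.
      by rewrite !inE he' andbT; apply/eqP => ee; rewrite ee hu in hue.
    apply: colors_ext (hf2 _ he2) => y hy.
    by case: eqP => // eyu; rewrite -eyu hy in hue.
Qed.


Definition edge_crit (T : finType) (G : hgraph T) k :=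
  forall e, e \in G.2 -> colorable (G.1, G.2 :\ e) k.
Definition noiso (T : finType) (G : hgraph T) :=
  forall x, x \in G.1 -> exists2 e, e \in G.2 & x \in e.

Lemma crit_char (T : finType) (G : hgraph T) k :
  is_hypergraph G -> 0 < k ->
  critical G k <-> [/\ ~ colorable G k, edge_crit G k & noiso G].
Proof.
move=> [hs hc] k0; split.
- move=> [[_ hchi] hcr]; split.
  + exact: (hchi k (ltnSn k)).
  + move=> e he; apply: hcr.
    * split; [split|split] => /=.
      - by move=> e' /setD1P [_ /hs].
      - by move=> e' /setD1P [_ /hc].
      - exact: subxx.
      - exact: subsetDl.
    * move/(f_equal snd) => /= /setP /(_ e).
      by rewrite !inE eqxx he.
  + move=> x hx.
    case: (boolP [exists e in G.2, x \in e]) => [/exists_inP [e he hxe]|hn].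
      by exists e.
    exfalso; apply: (hchi k (ltnSn k)).
    have hnx : forall e, e \in G.2 -> x \notin e.
      by move=> e he; apply/negP => hxe; move/exists_inP: hn; apply; exists e.
    have [f [hf1 hf2]] : colorable (G.1 :\ x, G.2) k.
      apply: hcr.
      * split; [split|split] => /=.
        - move=> e he; apply/subsetP => y hy; rewrite !inE (subsetP (hs _ he)) // andbT.
          by apply/eqP => yx; move: (hnx _ he); rewrite -yx hy.
        - exact: hc.
        - exact: subsetDl.
        - exact: subxx.
      * move/(f_equal fst) => /= /setP /(_ x).
        by rewrite !inE eqxx hx.
    exists (fun y => if y == x then 0 else f y); split.
    * move=> y hy; case: eqP => [//|/eqP yx]; apply: hf1; by rewrite !inE yx.
    * move=> e he; apply: colors_ext (hf2 _ he) => y hy.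
      case: eqP => // yx; rewrite yx in hy; by move: (hnx _ he); rewrite hy.
- move=> [hnc hec hni]; split; first split.
  + case: (eqVneq G.2 set0) => [E0|/set0Pn [e he]].
      by exists (fun _ => 0); split => // e; rewrite E0 inE.
    exact: colorable_S (conj hs hc) he (hec _ he).
  + move=> m hm hcm; apply: hnc; exact: colorable_mono hcm (subxx _) (subxx _) _.
  + move=> H [hH [s1 s2]] hne.
    case: (eqVneq H.2 G.2) => h2.
    * have : ~~ (G.1 \subset H.1).
        apply/negP => s1'; apply: hne.
        have h1 : H.1 = G.1 by apply/eqP; rewrite eqEsubset s1 s1'.
        by rewrite [H]surjective_pairing h1 h2 -surjective_pairing.
      case/subsetPn => x hx hxn.
      case: (hni _ hx) => e he hxe.
      rewrite -h2 in he; have := subsetP (hH.1 _ he) _ hxe; by rewrite (negbTE hxn).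
    * have : ~~ (G.2 \subset H.2).
        by apply/negP => s2'; move: h2; rewrite eqEsubset s2 s2'.
      case/subsetPn => e he hen.
      apply: colorable_mono (hec _ he) _ _ (leqnn k) => //=.
      apply/subsetP => e' he'; rewrite !inE (subsetP s2) // andbT.
      by apply/eqP => ee; move: hen; rewrite -ee he'.
Qed.

Lemma crit_deg (T : finType) (G : hgraph T) k v e :
  is_hypergraph G -> 1 < k -> critical G k -> e \in G.2 -> v \in e ->
  exists2 f, f \in G.2 & (f != e) && (v \in f).
Proof.
move=> hG k1 hcr he hv.
have [hnc hec _] := (crit_char hG (ltnW k1)).1 hcr.
case: (boolP [exists f in G.2, (f != e) && (v \in f)]) => [/exists_inP [f hf hf']|hn].
  by exists f.
exfalso; apply: hnc.
have [f [hf1 hf2]] := hec _ he.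
have : 1 < #|e| by apply: hG.2.
rewrite (cardsD1 v) hv add1n ltnS => /card_gt0P [u].
rewrite !inE => /andP [uv ue].
exists (fun y => if y == v then (if f u == 0 then 1 else 0) else f y); split.
- move=> x hx; case: eqP => _; last exact: hf1.
  by case: ifP => _; [exact: k1 | exact: ltnW k1].
- move=> e' he'; case: (eqVneq e' e) => [->|ne].
    exists v, u; rewrite eqxx (negbTE uv); split => //.
    by case: (f u) => [|[|n]].
  have hve' : v \notin e'.
    apply/negP => hve; move/exists_inP: hn; apply; exists e' => //; by rewrite ne.
  apply: colors_ext (hf2 e' _); last by rewrite !inE ne.
  by move=> y hy; case: eqP => // yv; move: hve'; rewrite -yv hy.
Qed.


Lemma data_sym (T : finType) (G1 G2 : hgraph T) v1 v2 vs e1 e2 :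
  hajos_data G1 G2 v1 v2 vs e1 e2 -> hajos_data G2 G1 v2 v1 vs e2 e1.
Proof.
move=> [h1 [h2 [hd [he1 [he2 [hv1 [hv2 hvs]]]]]]].
split=> //; split=> //; split; first by rewrite disjoint_sym.
do 4 (split => //); by rewrite setUC.
Qed.

Lemma rename_sym (T : finType) (v1 v2 vs x : T) :
  hajos_rename v1 v2 vs x = hajos_rename v2 v1 vs x.
Proof. by rewrite /hajos_rename orbC. Qed.

Lemma join_sym (T : finType) (G1 G2 : hgraph T) v1 v2 vs e1 e2 b :
  hajos_join G1 G2 v1 v2 vs e1 e2 b = hajos_join G2 G1 v2 v1 vs e2 e1 b.
Proof.
rewrite /hajos_join /=; congr pair; first by rewrite (setUC (G1.1 :\ v1)).
have Es : forall (E : {set {set T}}),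
  [set hajos_rename v1 v2 vs @: e | e : {set T} in E] = [set hajos_rename v2 v1 vs @: e | e : {set T} in E].
  move=> E; apply: eq_imset => e /=; apply: eq_imset => x; exact: rename_sym.
have e0 : (e1 :|: e2) :\: [set v1; v2] = (e2 :|: e1) :\: [set v2; v1].
  by apply/setP => x; rewrite !inE; case: (x \in e1); case: (x \in e2);
     case: (x == v1); case: (x == v2).
rewrite !Es e0; congr setU; exact: setUC.
Qed.


Definition hestar (T : finType) (v1 v2 vs : T) (e1 e2 : {set T}) (b : bool) :=
  if b then vs |: ((e1 :|: e2) :\: [set v1; v2]) else (e1 :|: e2) :\: [set v1; v2].

Lemma join_edgeE (T : finType) (G1 G2 : hgraph T) v1 v2 vs e1 e2 b e :
  (e \in (hajos_join G1 G2 v1 v2 vs e1 e2 b).2) =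
  [|| e \in [set hajos_rename v1 v2 vs @: f | f : {set T} in G1.2 :\ e1],
      e \in [set hajos_rename v1 v2 vs @: f | f : {set T} in G2.2 :\ e2] |
      e == hestar v1 v2 vs e1 e2 b].
Proof. by rewrite /hajos_join /= !inE orbA. Qed.

Lemma join_V (T : finType) (G1 G2 : hgraph T) v1 v2 vs e1 e2 b :
  (hajos_join G1 G2 v1 v2 vs e1 e2 b).1 = vs |: ((G1.1 :\ v1) :|: (G2.1 :\ v2)).
Proof. by []. Qed.

Lemma hestar_sym (T : finType) (v1 v2 vs : T) e1 e2 b :
  hestar v1 v2 vs e1 e2 b = hestar v2 v1 vs e2 e1 b.
Proof.
have e0 : (e1 :|: e2) :\: [set v1; v2] = (e2 :|: e1) :\: [set v2; v1].
  by apply/setP => x; rewrite !inE; case: (x \in e1); case: (x \in e2);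
     case: (x == v1); case: (x == v2).
by rewrite /hestar e0.
Qed.

Lemma dfacts (T : finType) (G1 G2 : hgraph T) v1 v2 vs e1 e2 :
  hajos_data G1 G2 v1 v2 vs e1 e2 ->
  [/\ v1 \in G1.1, v2 \notin G1.1, vs \notin G1.1 :\ v1,
      e1 \subset G1.1 & 1 < #|e1| ].
Proof.
move=> [h1 [h2 [hd [he1 [he2 [hv1 [hv2 hvs]]]]]]].
have s1 := h1.1 _ he1; have s2 := h2.1 _ he2.
split.
- exact: subsetP s1 _ hv1.
- by rewrite (disjointFl hd) // (subsetP s2).
- by move: hvs; rewrite inE negb_or => /andP [].
- exact: s1.
- exact: h1.2.
Qed.

Lemma disj12 (T : finType) (G1 G2 : hgraph T) v1 v2 vs e1 e2 x :
  hajos_data G1 G2 v1 v2 vs e1 e2 -> x \in G1.1 -> x \in G2.1 = false.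
Proof. move=> [_ [_ [hd _]]]; exact: disjointFr. Qed.

Lemma r1 (T : finType) (G1 G2 : hgraph T) v1 v2 vs e1 e2 y :
  hajos_data G1 G2 v1 v2 vs e1 e2 -> y \in G1.1 ->
  hajos_rename v1 v2 vs y = if y == v1 then vs else y.
Proof.
move=> D hy; have [_ hv2 _ _ _] := dfacts D.
rewrite /hajos_rename; case: eqP => //= _.
by case: eqP => // yv2; rewrite -yv2 hy in hv2.
Qed.

Lemma r2 (T : finType) (G1 G2 : hgraph T) v1 v2 vs e1 e2 y :
  hajos_data G1 G2 v1 v2 vs e1 e2 -> y \in G2.1 ->
  hajos_rename v1 v2 vs y = if y == v2 then vs else y.
Proof. move=> D hy; rewrite rename_sym; exact: r1 (data_sym D) hy. Qed.

Lemma rinj1 (T : finType) (G1 G2 : hgraph T) v1 v2 vs e1 e2 y z :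
  hajos_data G1 G2 v1 v2 vs e1 e2 -> y \in G1.1 -> z \in G1.1 ->
  hajos_rename v1 v2 vs y = hajos_rename v1 v2 vs z -> y = z.
Proof.
move=> D hy hz; have [_ _ hvs _ _] := dfacts D.
rewrite (r1 D hy) (r1 D hz).
case: (eqVneq y v1) => [->|yv]; case: (eqVneq z v1) => [->|zv] //.
- by move=> ezs; move: hvs; rewrite ezs !inE zv hz.
- by move=> ezs; move: hvs; rewrite -ezs !inE yv hy.
Qed.

Lemma rimset_inj1 (T : finType) (G1 G2 : hgraph T) v1 v2 vs e1 e2 (f f' : {set T}) :
  hajos_data G1 G2 v1 v2 vs e1 e2 -> f \subset G1.1 -> f' \subset G1.1 ->
  hajos_rename v1 v2 vs @: f = hajos_rename v1 v2 vs @: f' -> f = f'.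
Proof.
move=> D s s' E.
have H : forall g g' : {set T}, g \subset G1.1 -> g' \subset G1.1 ->
    hajos_rename v1 v2 vs @: g = hajos_rename v1 v2 vs @: g' -> g \subset g'.
  move=> g g' sg sg' Eg; apply/subsetP => x hx.
  have : hajos_rename v1 v2 vs x \in hajos_rename v1 v2 vs @: g' by rewrite -Eg imset_f.
  case/imsetP => y hy /(rinj1 D (subsetP sg _ hx) (subsetP sg' _ hy)) ->; exact: hy.
by apply/eqP; rewrite eqEsubset (H _ _ s s' E) (H _ _ s' s (esym E)).
Qed.

Lemma rV1 (T : finType) (G1 G2 : hgraph T) v1 v2 vs e1 e2 b y :
  hajos_data G1 G2 v1 v2 vs e1 e2 -> y \in G1.1 ->
  hajos_rename v1 v2 vs y \in (hajos_join G1 G2 v1 v2 vs e1 e2 b).1.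
Proof.
move=> D hy; rewrite (r1 D hy) join_V; case: (eqVneq y v1) => [_|yv]; rewrite !inE ?eqxx //.
by rewrite yv hy /= !orbT.
Qed.

Lemma rnotin1 (T : finType) (G1 G2 : hgraph T) v1 v2 vs e1 e2 (f : {set T}) w :
  hajos_data G1 G2 v1 v2 vs e1 e2 -> f \subset G1.1 -> w \in G2.1 -> w != v2 ->
  w \notin hajos_rename v1 v2 vs @: f.
Proof.
move=> D sf hw wv; apply/imsetP => [[y hy]].
have hy1 := subsetP sf _ hy.
have [_ _ hvs _ _] := dfacts (data_sym D).
rewrite (r1 D hy1); case: eqP => _ ew.
- by move: hvs; rewrite -ew !inE wv hw.
- by move: (disj12 D hy1); rewrite -ew hw.
Qed.

Lemma other1 (T : finType) (G1 G2 : hgraph T) v1 v2 vs e1 e2 :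
  hajos_data G1 G2 v1 v2 vs e1 e2 -> exists2 x, x \in e1 & x != v1.
Proof.
move=> D; have [_ _ _ _ hc] := dfacts D.
move: hc; rewrite (cardsD1 v1) (D.2.2.2.2.2.1) add1n ltnS => /card_gt0P [u].
by rewrite !inE => /andP [uv ue]; exists u.
Qed.

Lemma other_edge (T : finType) (G : hgraph T) v (f : {set T}) :
  is_hypergraph G -> f \in G.2 -> exists2 x, x \in f & x != v.
Proof.
move=> [_ hc] hf; have := hc _ hf.
case: (boolP (v \in f)) => hv.
  rewrite (cardsD1 v) hv add1n ltnS => /card_gt0P [u].
  by rewrite !inE => /andP [uv ue]; exists u.
move/ltnW/card_gt0P => [u hu]; exists u => //; apply/negP => /eqP uv.
by rewrite -uv hu in hv.
Qed.

Lemma estar_in1 (T : finType) (G1 G2 : hgraph T) v1 v2 vs e1 e2 b x :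
  hajos_data G1 G2 v1 v2 vs e1 e2 -> x \in e1 -> x != v1 ->
  x \in hestar v1 v2 vs e1 e2 b.
Proof.
move=> D hx xv; have [_ hv2 _ s1 _] := dfacts D.
have xv2 : x != v2 by apply/eqP => e; rewrite -e (subsetP s1) in hv2.
have h : x \in (e1 :|: e2) :\: [set v1; v2] by rewrite !inE hx (negbTE xv) (negbTE xv2).
by rewrite /hestar; case: b => //; rewrite inE h orbT.
Qed.

Lemma estar_cases (T : finType) (v1 v2 vs : T) e1 e2 b x :
  x \in hestar v1 v2 vs e1 e2 b ->
  [\/ x = vs, (x \in e1) && (x != v1) && (x != v2) | (x \in e2) && (x != v1) && (x != v2)].
Proof.
have H : x \in (e1 :|: e2) :\: [set v1; v2] ->
  [\/ x = vs, (x \in e1) && (x != v1) && (x != v2) | (x \in e2) && (x != v1) && (x != v2)].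
  rewrite !inE negb_or => /andP [/andP [a b'] /orP [c|c]].
  - by apply: Or32; rewrite c a b'.
  - by apply: Or33; rewrite c a b'.
rewrite /hestar; case: b => //; case/setU1P => [->|]; first by apply: Or31.
exact: H.
Qed.

Lemma rimset_sym (T : finType) (v1 v2 vs : T) (f : {set T}) :
  hajos_rename v1 v2 vs @: f = hajos_rename v2 v1 vs @: f.
Proof. apply: eq_imset => x; exact: rename_sym. Qed.

Lemma rf1_in (T : finType) (G1 G2 : hgraph T) v1 v2 vs e1 e2 b (f : {set T}) :
  f \in G1.2 -> f != e1 ->
  hajos_rename v1 v2 vs @: f \in (hajos_join G1 G2 v1 v2 vs e1 e2 b).2.
Proof. by move=> hf fe; rewrite join_edgeE imset_f // !inE fe hf. Qed.

Lemma rf2_in (T : finType) (G1 G2 : hgraph T) v1 v2 vs e1 e2 b (f : {set T}) :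
  f \in G2.2 -> f != e2 ->
  hajos_rename v1 v2 vs @: f \in (hajos_join G1 G2 v1 v2 vs e1 e2 b).2.
Proof. by move=> hf fe; rewrite join_edgeE; apply/orP; right; apply/orP; left; rewrite imset_f // !inE fe hf. Qed.

Lemma estar_in (T : finType) (G1 G2 : hgraph T) v1 v2 vs e1 e2 b :
  hestar v1 v2 vs e1 e2 b \in (hajos_join G1 G2 v1 v2 vs e1 e2 b).2.
Proof. by rewrite join_edgeE eqxx !orbT. Qed.

Lemma rf1_neq_estar (T : finType) (G1 G2 : hgraph T) v1 v2 vs e1 e2 b (f : {set T}) :
  hajos_data G1 G2 v1 v2 vs e1 e2 -> f \subset G1.1 ->
  hajos_rename v1 v2 vs @: f != hestar v1 v2 vs e1 e2 b.
Proof.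
move=> D sf; have D' := data_sym D.
have [w hw wv] := other1 D'.
have [_ _ _ s2 _] := dfacts D'.
have hw' : w \in hestar v1 v2 vs e1 e2 b by rewrite hestar_sym; exact: estar_in1 D' hw wv.
apply/eqP => E; move: (rnotin1 D sf (subsetP s2 _ hw) wv); by rewrite E hw'.
Qed.

Lemma rf2_neq_estar (T : finType) (G1 G2 : hgraph T) v1 v2 vs e1 e2 b (f : {set T}) :
  hajos_data G1 G2 v1 v2 vs e1 e2 -> f \subset G2.1 ->
  hajos_rename v1 v2 vs @: f != hestar v1 v2 vs e1 e2 b.
Proof.
move=> D sf; rewrite rimset_sym hestar_sym; exact: rf1_neq_estar (data_sym D) sf.
Qed.

Lemma rf12_neq (T : finType) (G1 G2 : hgraph T) v1 v2 vs e1 e2 (f g : {set T}) :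
  hajos_data G1 G2 v1 v2 vs e1 e2 -> f \subset G1.1 -> g \in G2.2 ->
  hajos_rename v1 v2 vs @: f != hajos_rename v1 v2 vs @: g.
Proof.
move=> D sf hg; have h2 := D.2.1.
have [w hw wv] := other_edge v2 h2 hg.
have hw2 := subsetP (h2.1 _ hg) _ hw.
have rw : hajos_rename v1 v2 vs w = w by rewrite (r2 D hw2) (negbTE wv).
have hin : w \in hajos_rename v1 v2 vs @: g by rewrite -[X in X \in _]rw imset_f.
apply/eqP => E; move: (rnotin1 D sf hw2 wv); by rewrite E hin.
Qed.

Lemma edge1_ok (T : finType) (G1 G2 : hgraph T) v1 v2 vs e1 e2 b (f : {set T}) :
  hajos_data G1 G2 v1 v2 vs e1 e2 -> f \in G1.2 ->
  (hajos_rename v1 v2 vs @: f \subset (hajos_join G1 G2 v1 v2 vs e1 e2 b).1) /\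
  1 < #|hajos_rename v1 v2 vs @: f|.
Proof.
move=> D hf; have h1 := D.1; have sf := h1.1 _ hf.
split.
- apply/subsetP => x /imsetP [y hy ->]; exact: rV1 D (subsetP sf _ hy).
- rewrite card_in_imset; first exact: h1.2.
  move=> y z hy hz; exact: rinj1 D (subsetP sf _ hy) (subsetP sf _ hz).
Qed.

Lemma join_hyp (T : finType) (G1 G2 : hgraph T) v1 v2 vs e1 e2 b :
  hajos_data G1 G2 v1 v2 vs e1 e2 -> is_hypergraph (hajos_join G1 G2 v1 v2 vs e1 e2 b).
Proof.
move=> D.
suff H : forall e, e \in (hajos_join G1 G2 v1 v2 vs e1 e2 b).2 ->
   e \subset (hajos_join G1 G2 v1 v2 vs e1 e2 b).1 /\ 1 < #|e|.
  by split => e /H [].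
move=> e; rewrite join_edgeE => /orP [/imsetP [f hf ->]|/orP [/imsetP [f hf ->]|/eqP ->]].
- move: hf; rewrite inE => /andP [_ hf]; exact: edge1_ok D hf.
- move: hf; rewrite inE => /andP [_ hf].
  rewrite join_sym rimset_sym; exact: edge1_ok (data_sym D) hf.
- have D' := data_sym D.
  have [x hx xv] := other1 D; have [w hw wv] := other1 D'.
  have [_ _ _ s1 _] := dfacts D; have [_ _ _ s2 _] := dfacts D'.
  have hx1 := subsetP s1 _ hx; have hw2 := subsetP s2 _ hw.
  split.
  + apply/subsetP => y /estar_cases [->|/andP [/andP [a c] _]|/andP [/andP [a _] c]];
      rewrite join_V !inE.
    * by rewrite eqxx.
    * by rewrite c (subsetP s1 _ a) orbT.
    * by rewrite c (subsetP s2 _ a) !orbT.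
  + have xw : x != w by apply/eqP => exw; move: (disj12 D hx1); rewrite exw hw2.
    suff : #|[set x; w]| <= #|hestar v1 v2 vs e1 e2 b| by rewrite cards2 xw.
    apply: subset_leq_card; apply/subsetP => y.
    rewrite !inE => /orP [/eqP ->|/eqP ->]; first exact: estar_in1 D hx xv.
    rewrite hestar_sym; exact: estar_in1 D' hw wv.
Qed.


Definition dcomb (T : finType) (G1 G2 : hgraph T) (v1 v2 : T) (g1 g2 : T -> nat) y :=
  if y \in G1.1 :\ v1 then g1 y else if y \in G2.1 :\ v2 then g2 y else g1 v1.

Lemma dcomb1 (T : finType) (G1 G2 : hgraph T) v1 v2 vs e1 e2 g1 g2 y :
  hajos_data G1 G2 v1 v2 vs e1 e2 -> g1 v1 = g2 v2 -> y \in G1.1 ->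
  dcomb G1 G2 v1 v2 g1 g2 (hajos_rename v1 v2 vs y) = g1 y.
Proof.
move=> D E hy; have [_ _ hvs _ _] := dfacts D; have [_ _ hvs' _ _] := dfacts (data_sym D).
rewrite (r1 D hy) /dcomb; case: (eqVneq y v1) => [->|yv].
- by rewrite (negbTE hvs) (negbTE hvs').
- by rewrite !inE yv hy.
Qed.

Lemma dcomb2 (T : finType) (G1 G2 : hgraph T) v1 v2 vs e1 e2 g1 g2 y :
  hajos_data G1 G2 v1 v2 vs e1 e2 -> g1 v1 = g2 v2 -> y \in G2.1 ->
  dcomb G1 G2 v1 v2 g1 g2 (hajos_rename v1 v2 vs y) = g2 y.
Proof.
move=> D E hy; have [_ _ hvs _ _] := dfacts D; have [_ _ hvs' _ _] := dfacts (data_sym D).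
rewrite (r2 D hy) /dcomb; case: (eqVneq y v2) => [->|yv].
- by rewrite (negbTE hvs) (negbTE hvs').
- have hy1 : y \in G1.1 = false by apply: disj12 (data_sym D) hy.
  by rewrite !inE yv hy hy1 andbF.
Qed.

Lemma dcomb_lt (T : finType) (G1 G2 : hgraph T) v1 v2 g1 g2 k x :
  (forall y, y \in G1.1 -> g1 y < k) -> (forall y, y \in G2.1 -> g2 y < k) ->
  v1 \in G1.1 -> dcomb G1 G2 v1 v2 g1 g2 x < k.
Proof.
move=> h1 h2 hv; rewrite /dcomb; case: ifP => [/setD1P [_ /h1] //|_].
case: ifP => [/setD1P [_ /h2] //|_]; exact: h1.
Qed.

Lemma dc_r1 (T : finType) (G1 G2 : hgraph T) v1 v2 vs e1 e2 g1 g2 (f : {set T}) :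
  hajos_data G1 G2 v1 v2 vs e1 e2 -> g1 v1 = g2 v2 -> f \in G1.2 -> colors g1 f ->
  colors (dcomb G1 G2 v1 v2 g1 g2) (hajos_rename v1 v2 vs @: f).
Proof.
move=> D E hf hc; apply/colors_imset; apply: colors_ext hc => y hy.
by rewrite (dcomb1 D E (subsetP (D.1.1 _ hf) _ hy)).
Qed.

Lemma dc_r2 (T : finType) (G1 G2 : hgraph T) v1 v2 vs e1 e2 g1 g2 (f : {set T}) :
  hajos_data G1 G2 v1 v2 vs e1 e2 -> g1 v1 = g2 v2 -> f \in G2.2 -> colors g2 f ->
  colors (dcomb G1 G2 v1 v2 g1 g2) (hajos_rename v1 v2 vs @: f).
Proof.
move=> D E hf hc; apply/colors_imset; apply: colors_ext hc => y hy.
by rewrite (dcomb2 D E (subsetP (D.2.1.1 _ hf) _ hy)).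
Qed.

Lemma dc_estar (T : finType) (G1 G2 : hgraph T) v1 v2 vs e1 e2 b g1 g2 x w :
  hajos_data G1 G2 v1 v2 vs e1 e2 -> g1 v1 = g2 v2 ->
  x \in e1 -> x != v1 -> w \in e2 -> w != v2 -> g1 x != g2 w ->
  colors (dcomb G1 G2 v1 v2 g1 g2) (hestar v1 v2 vs e1 e2 b).
Proof.
move=> D E hx xv hw wv hne; have D' := data_sym D.
have [_ _ _ s1 _] := dfacts D; have [_ _ _ s2 _] := dfacts D'.
exists x, w; split.
- exact: estar_in1 D hx xv.
- rewrite hestar_sym; exact: estar_in1 D' hw wv.
- have h1 := dcomb1 D E (subsetP s1 _ hx); rewrite (r1 D (subsetP s1 _ hx)) (negbTE xv) in h1.
  have h2 := dcomb2 D E (subsetP s2 _ hw); rewrite (r2 D (subsetP s2 _ hw)) (negbTE wv) in h2.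
  by rewrite h1 h2.
Qed.

Lemma pick_diff (T : finType) (g : T -> nat) (e : {set T}) v :
  colors g e -> exists2 x, x \in e & g x != g v.
Proof.
move=> [x [y [hx hy hxy]]].
case: (eqVneq (g x) (g v)) => [E|]; last by exists x.
by exists y => //; rewrite -E eq_sym.
Qed.

Lemma mono1 (T : finType) (G1 G2 : hgraph T) v1 v2 vs e1 e2 b k (c : T -> nat) :
  hajos_data G1 G2 v1 v2 vs e1 e2 -> ~ colorable G1 k ->
  (forall x, x \in (hajos_join G1 G2 v1 v2 vs e1 e2 b).1 -> c x < k) ->
  (forall f, f \in G1.2 -> f != e1 -> colors c (hajos_rename v1 v2 vs @: f)) ->
  forall y, y \in e1 -> c (hajos_rename v1 v2 vs y) = c vs.
Proof.
move=> D hnc hb hcol y hy.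
have [hv1 _ _ s1 _] := dfacts D.
have hnot : ~ colors (fun y => c (hajos_rename v1 v2 vs y)) e1.
  move=> hc; apply: hnc; exists (fun y => c (hajos_rename v1 v2 vs y)); split.
  - by move=> x hx; apply: hb; apply: rV1 D hx.
  - move=> f hf; case: (eqVneq f e1) => [->//|fe].
    by apply/colors_imset; apply: hcol.
rewrite (not_colors hnot hy D.2.2.2.2.2.1) /=.
by rewrite (r1 D hv1) eqxx.
Qed.

Lemma mono2 (T : finType) (G1 G2 : hgraph T) v1 v2 vs e1 e2 b k (c : T -> nat) :
  hajos_data G1 G2 v1 v2 vs e1 e2 -> ~ colorable G2 k ->
  (forall x, x \in (hajos_join G1 G2 v1 v2 vs e1 e2 b).1 -> c x < k) ->
  (forall f, f \in G2.2 -> f != e2 -> colors c (hajos_rename v1 v2 vs @: f)) ->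
  forall y, y \in e2 -> c (hajos_rename v1 v2 vs y) = c vs.
Proof.
move=> D hnc hb hcol y hy; rewrite rename_sym.
apply: (mono1 (b := b) (data_sym D) hnc) => //.
- by move=> x; rewrite -join_sym; apply: hb.
- by move=> f hf fe; rewrite -rimset_sym; apply: hcol.
Qed.


Lemma A_noncol (T : finType) (G1 G2 : hgraph T) v1 v2 vs e1 e2 b k :
  hajos_data G1 G2 v1 v2 vs e1 e2 -> ~ colorable G1 k -> ~ colorable G2 k ->
  ~ colorable (hajos_join G1 G2 v1 v2 vs e1 e2 b) k.
Proof.
move=> D hn1 hn2 [c [hb hc]].
have h1 : forall f, f \in G1.2 -> f != e1 -> colors c (hajos_rename v1 v2 vs @: f).
  by move=> f hf fe; apply: hc; apply: rf1_in.
have h2 : forall f, f \in G2.2 -> f != e2 -> colors c (hajos_rename v1 v2 vs @: f).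
  by move=> f hf fe; apply: hc; apply: rf2_in.
have m1 := mono1 D hn1 hb h1.
have m2 := mono2 D hn2 hb h2.
have hall : forall z, z \in hestar v1 v2 vs e1 e2 b -> c z = c vs.
  move=> z /estar_cases [->//|/andP [/andP [a c1] c2]|/andP [/andP [a c1] c2]].
  - by rewrite -(m1 _ a) /hajos_rename (negbTE c1) (negbTE c2).
  - by rewrite -(m2 _ a) /hajos_rename (negbTE c1) (negbTE c2).
have [x [y [hx hy]]] := hc _ (estar_in G1 G2 v1 v2 vs e1 e2 b).
by rewrite (hall _ hx) (hall _ hy) eqxx.
Qed.

Lemma tsw_l a b : tsw a b a = b.
Proof. by rewrite /tsw eqxx. Qed.

Lemma A_ec1 (T : finType) (G1 G2 : hgraph T) v1 v2 vs e1 e2 b k (f : {set T}) :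
  hajos_data G1 G2 v1 v2 vs e1 e2 -> 1 < k -> critical G1 k -> critical G2 k ->
  f \in G1.2 -> f != e1 ->
  colorable ((hajos_join G1 G2 v1 v2 vs e1 e2 b).1,
             (hajos_join G1 G2 v1 v2 vs e1 e2 b).2 :\ hajos_rename v1 v2 vs @: f) k.
Proof.
move=> D k1 hc1 hc2 hf fe.
have D' := data_sym D.
have [hv1 _ _ s1 _] := dfacts D; have [hv2 _ _ s2 _] := dfacts D'.
have [hn1 ec1 _] := (crit_char D.1 (ltnW k1)).1 hc1.
have [hn2 ec2 _] := (crit_char D.2.1 (ltnW k1)).1 hc2.
have [c1 [b1 col1]] := ec1 _ hf.
have [c2 [b2 col2]] := ec2 _ D.2.2.2.2.1.
have he1f : e1 \in G1.2 :\ f by rewrite !inE eq_sym fe D.2.2.2.1.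
have [x hx hxv] := pick_diff v1 (col1 _ he1f).
have xv : x != v1 by apply/eqP => E; rewrite E eqxx in hxv.
have nc2 : ~ colors c2 e2.
  move=> hce; apply: hn2; exists c2; split => // g hg.
  case: (eqVneq g e2) => [->//|ge]; apply: col2; by rewrite !inE ge hg.
set c2' := fun y => tsw (c2 v2) (c1 v1) (c2 y).
have E : c1 v1 = c2' v2 by rewrite /c2' tsw_l.
have [w hw wv] := other1 D'.
have b2' : forall y, y \in G2.1 -> c2' y < k.
  move=> y hy; apply: tsw_lt; [exact: b2 | exact: b1 | exact: b2].
exists (dcomb G1 G2 v1 v2 c1 c2'); split.
  by move=> z _; apply: dcomb_lt.
move=> e /setD1P [ef he]; move: he ef; rewrite join_edgeE => /orP [/imsetP [g hg ->] ef|/orP [/imsetP [g hg ->] _|/eqP -> _]].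
- move/setD1P: hg => [_ hg]; apply: (dc_r1 D E hg); apply: col1.
  by rewrite !inE hg andbT; apply/eqP => gf; move: ef; rewrite gf eqxx.
- move/setD1P: hg => [ge hg]; apply: (dc_r2 D E hg).
  apply: colors_comp; [exact: tsw_inj | apply: col2; by rewrite !inE ge hg].
- have cw : c2' w = c2' v2.
    by rewrite /c2' (not_colors nc2 hw D.2.2.2.2.2.2.1).
  apply: (dc_estar b D E hx xv hw wv).
  by rewrite cw -E.
Qed.

Lemma A_ecstar (T : finType) (G1 G2 : hgraph T) v1 v2 vs e1 e2 b k :
  hajos_data G1 G2 v1 v2 vs e1 e2 -> 1 < k -> critical G1 k -> critical G2 k ->
  colorable ((hajos_join G1 G2 v1 v2 vs e1 e2 b).1,
             (hajos_join G1 G2 v1 v2 vs e1 e2 b).2 :\ hestar v1 v2 vs e1 e2 b) k.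
Proof.
move=> D k1 hc1 hc2.
have D' := data_sym D.
have [hv1 _ _ s1 _] := dfacts D; have [hv2 _ _ s2 _] := dfacts D'.
have [hn1 ec1 _] := (crit_char D.1 (ltnW k1)).1 hc1.
have [hn2 ec2 _] := (crit_char D.2.1 (ltnW k1)).1 hc2.
have [c1 [b1 col1]] := ec1 _ D.2.2.2.1.
have [c2 [b2 col2]] := ec2 _ D.2.2.2.2.1.
set c2' := fun y => tsw (c2 v2) (c1 v1) (c2 y).
have E : c1 v1 = c2' v2 by rewrite /c2' tsw_l.
have b2' : forall y, y \in G2.1 -> c2' y < k.
  move=> y hy; apply: tsw_lt; [exact: b2 | exact: b1 | exact: b2].
exists (dcomb G1 G2 v1 v2 c1 c2'); split.
  by move=> z _; apply: dcomb_lt.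
move=> e /setD1P [ef he]; move: he ef; rewrite join_edgeE => /orP [/imsetP [g hg ->] _|/orP [/imsetP [g hg ->] _|/eqP -> ef]].
- have hg' : g \in G1.2 by move: hg => /setD1P [].
  apply: (dc_r1 D E hg'); exact: col1.
- have hg' : g \in G2.2 by move: hg => /setD1P [].
  apply: (dc_r2 D E hg'); apply: colors_comp; [exact: tsw_inj | exact: col2].
- by rewrite eqxx in ef.
Qed.

Lemma A_noiso_vs (T : finType) (G1 G2 : hgraph T) v1 v2 vs e1 e2 b k :
  hajos_data G1 G2 v1 v2 vs e1 e2 -> 1 < k -> critical G1 k ->
  exists2 e, e \in (hajos_join G1 G2 v1 v2 vs e1 e2 b).2 & vs \in e.
Proof.
move=> D k1 hc1; have [hv1 _ _ _ _] := dfacts D.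
have [f hf /andP [fe hvf]] := crit_deg D.1 k1 hc1 D.2.2.2.1 D.2.2.2.2.2.1.
exists (hajos_rename v1 v2 vs @: f); first exact: rf1_in.
by apply/imsetP; exists v1 => //; rewrite (r1 D hv1) eqxx.
Qed.

Lemma A_noiso1 (T : finType) (G1 G2 : hgraph T) v1 v2 vs e1 e2 b k x :
  hajos_data G1 G2 v1 v2 vs e1 e2 -> 1 < k -> critical G1 k -> x \in G1.1 -> x != v1 ->
  exists2 e, e \in (hajos_join G1 G2 v1 v2 vs e1 e2 b).2 & x \in e.
Proof.
move=> D k1 hc1 hx xv.
have [_ _ ni] := (crit_char D.1 (ltnW k1)).1 hc1.
have [f hf hxf] := ni _ hx.
case: (eqVneq f e1) => [fe|fe].
  exists (hestar v1 v2 vs e1 e2 b); first exact: estar_in.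
  by apply: estar_in1 D _ xv; rewrite -fe.
exists (hajos_rename v1 v2 vs @: f); first exact: rf1_in.
by apply/imsetP; exists x => //; rewrite (r1 D hx) (negbTE xv).
Qed.

Lemma thm_a (T : finType) (G1 G2 : hgraph T) v1 v2 vs e1 e2 b k :
  hajos_data G1 G2 v1 v2 vs e1 e2 -> 1 < k -> critical G1 k -> critical G2 k ->
  critical (hajos_join G1 G2 v1 v2 vs e1 e2 b) k.
Proof.
move=> D k1 hc1 hc2; have D' := data_sym D.
have [hn1 _ _] := (crit_char D.1 (ltnW k1)).1 hc1.
have [hn2 _ _] := (crit_char D.2.1 (ltnW k1)).1 hc2.
apply/(crit_char (join_hyp b D) (ltnW k1)); split.
- exact: A_noncol.
- move=> e; rewrite join_edgeE => /orP [/imsetP [g hg ->]|/orP [/imsetP [g hg ->]|/eqP ->]].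
  + move/setD1P: hg => [ge hg]; exact: A_ec1.
  + move/setD1P: hg => [ge hg]; rewrite join_sym rimset_sym; exact: A_ec1.
  + exact: A_ecstar.
- move=> x; rewrite join_V => /setU1P [->|/setUP [/setD1P [xv hx]|/setD1P [xv hx]]].
  + exact: (A_noiso_vs _ D k1 hc1).
  + exact: (A_noiso1 _ D k1 hc1 hx xv).
  + rewrite join_sym; exact: A_noiso1 D' k1 hc2 hx xv.
Qed.


Lemma colors_dec (T : finType) (g : T -> nat) (e : {set T}) : colors g e \/ ~ colors g e.
Proof.
case: (boolP [exists x in e, exists y in e, g x != g y]) => h.
- left; move/exists_inP: h => [x hx /exists_inP [y hy hxy]]; by exists x, y.
- right => [[x [y [hx hy hxy]]]]; move/negP: h; apply; apply/exists_inP; exists x => //.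
  by apply/exists_inP; exists y.
Qed.

Lemma tsw_other a b x : x != a -> x != b -> tsw a b x = x.
Proof. by move=> xa xb; rewrite /tsw (negbTE xa) (negbTE xb). Qed.

Lemma third k a b : 2 < k -> exists2 g, g < k & (g != a) && (g != b).
Proof.
move=> k2.
case: (boolP ((0 != a) && (0 != b))) => h0; first by exists 0 => //; exact: leq_trans k2.
case: (boolP ((1 != a) && (1 != b))) => h1; first by exists 1 => //; exact: leq_trans k2.
exists 2 => //; move: h0 h1; rewrite !negb_and !negbK.
case/orP => /eqP h0; case/orP => /eqP h1; apply/andP; split; apply/eqP; lia.
Qed.

Lemma vs_in (T : finType) (G1 G2 : hgraph T) v1 v2 vs e1 e2 b :
  vs \in (hajos_join G1 G2 v1 v2 vs e1 e2 b).1.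
Proof. by rewrite join_V setU11. Qed.

Lemma rV2 (T : finType) (G1 G2 : hgraph T) v1 v2 vs e1 e2 b y :
  hajos_data G1 G2 v1 v2 vs e1 e2 -> y \in G2.1 ->
  hajos_rename v1 v2 vs y \in (hajos_join G1 G2 v1 v2 vs e1 e2 b).1.
Proof. move=> D hy; rewrite join_sym rename_sym; exact: rV1 (data_sym D) hy. Qed.

Lemma B_noncol1 (T : finType) (G1 G2 : hgraph T) v1 v2 vs e1 e2 b k :
  hajos_data G1 G2 v1 v2 vs e1 e2 -> 2 < k ->
  critical (hajos_join G1 G2 v1 v2 vs e1 e2 b) k -> ~ colorable G1 k.
Proof.
move=> D k2 hcJ [c1 [b1 col1]].
have D' := data_sym D.
have [hv1 _ _ s1 _] := dfacts D; have [hv2 _ _ s2 _] := dfacts D'.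
have k0 : 0 < k by apply: leq_trans k2.
have [hnJ ecJ _] := (crit_char (join_hyp b D) k0).1 hcJ.
have [c [bc colc]] := ecJ _ (estar_in G1 G2 v1 v2 vs e1 e2 b).
set g2 := fun y => c (hajos_rename v1 v2 vs y).
have E2 : g2 v2 = c vs by rewrite /g2 (r2 D hv2) eqxx.
have [x hx hxv] := pick_diff v1 (col1 _ D.2.2.2.1).
have xv : x != v1 by apply/eqP => E; rewrite E eqxx in hxv.
have [w hw wv] := other1 D'.
have [gm gk /andP [ga gb]] := third (c vs) (g2 w) k2.
set a := c1 v1; set a' := c1 x.
set s := tsw a (c vs); set a'' := s a'.
set t := tsw a'' gm.
set c1' := fun y => t (s (c1 y)).
have hav : c vs < k by apply: bc; apply: vs_in.
have ha : a < k by apply: b1.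
have ha'' : a'' < k by apply: tsw_lt => //; apply: b1; exact: subsetP s1 _ hx.
have a''ne : c vs != a''.
  apply/eqP => E; move: hxv; rewrite -/a -/a' => /eqP; apply.
  apply: (tsw_inj (a := a) (b := c vs)); by rewrite -/s -/a'' -E /s tsw_l.
have E1 : c1' v1 = g2 v2.
  by rewrite /c1' -/a /s tsw_l /t tsw_other // ?E2 // eq_sym.
have b1' : forall y, y \in G1.1 -> c1' y < k.
  by move=> y hy; rewrite /c1' /t; apply: tsw_lt => //; apply: tsw_lt => //; apply: b1.
have b2' : forall y, y \in G2.1 -> g2 y < k.
  by move=> y hy; apply: bc; apply: rV2.
apply: hnJ; exists (dcomb G1 G2 v1 v2 c1' g2); split.
  by move=> z _; apply: dcomb_lt.
move=> e; rewrite join_edgeE => /orP [/imsetP [g hg ->]|/orP [/imsetP [g hg ->]|/eqP ->]].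
- have hg' : g \in G1.2 by move: hg => /setD1P [].
  apply: (dc_r1 D E1 hg'); rewrite /c1'.
  apply: (colors_comp (h := t)); first exact: tsw_inj.
  apply: colors_comp; [exact: tsw_inj | exact: col1].
- have hg' : g \in G2.2 by move: hg => /setD1P [].
  apply: (dc_r2 D E1 hg'); apply/colors_imset; apply: colc.
  apply/setD1P; split; first exact: rf2_neq_estar D (D.2.1.1 _ hg').
  apply: rf2_in => //; by move: hg => /setD1P [].
- apply: (dc_estar b D E1 hx xv hw wv).
  have -> : c1' x = gm by rewrite /c1' /= -/a' -/a'' /t tsw_l.
  exact: gb.
Qed.

Lemma B_ec1 (T : finType) (G1 G2 : hgraph T) v1 v2 vs e1 e2 b k :
  hajos_data G1 G2 v1 v2 vs e1 e2 -> 2 < k ->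
  critical (hajos_join G1 G2 v1 v2 vs e1 e2 b) k -> edge_crit G1 k.
Proof.
move=> D k2 hcJ f hf.
have D' := data_sym D.
have [hv1 _ _ s1 _] := dfacts D; have [hv2 _ _ s2 _] := dfacts D'.
have k0 : 0 < k by apply: leq_trans k2.
have [hnJ ecJ _] := (crit_char (join_hyp b D) k0).1 hcJ.
have hn2 : ~ colorable G2 k.
  by apply: (B_noncol1 (b := b) D' k2); rewrite -join_sym.
have sf := D.1.1 _ hf.
case: (eqVneq f e1) => [fe|fe].
- have [c [bc colc]] := ecJ _ (estar_in G1 G2 v1 v2 vs e1 e2 b).
  exists (fun y => c (hajos_rename v1 v2 vs y)); split.
    by move=> y hy; apply: bc; apply: rV1.
  move=> g /setD1P [ge hg]; apply/colors_imset; apply: colc.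
  apply/setD1P; split; first exact: rf1_neq_estar D (D.1.1 _ hg).
  by apply: rf1_in => //; rewrite -fe.
- have hinf : hajos_rename v1 v2 vs @: f \in (hajos_join G1 G2 v1 v2 vs e1 e2 b).2.
    exact: rf1_in.
  have [c [bc colc]] := ecJ _ hinf.
  set g1 := fun y => c (hajos_rename v1 v2 vs y).
  exists g1; split.
    by move=> y hy; apply: bc; apply: rV1.
  move=> g /setD1P [gf hg].
  case: (eqVneq g e1) => [->|ge]; last first.
    have hgin : hajos_rename v1 v2 vs @: g \in (hajos_join G1 G2 v1 v2 vs e1 e2 b).2 :\ hajos_rename v1 v2 vs @: f.
      apply/setD1P; split; last exact: rf1_in.
      apply/negP => /eqP E; move: gf; by rewrite (rimset_inj1 D (D.1.1 _ hg) sf E) eqxx.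
    rewrite /g1; apply/(colors_imset c (hajos_rename v1 v2 vs) g).1; exact: colc _ hgin.
  case: (colors_dec g1 e1) => // hn1.
  exfalso; apply: hn2.
  have m1 : forall y, y \in e1 -> c (hajos_rename v1 v2 vs y) = c vs.
    move=> y hy; rewrite -/(g1 y) (not_colors hn1 hy D.2.2.2.2.2.1) /g1.
    by rewrite (r1 D hv1) eqxx.
  exists (fun y => c (hajos_rename v1 v2 vs y)); split.
    by move=> y hy; apply: bc; apply: rV2.
  move=> g' hg'; case: (eqVneq g' e2) => [->|g'e]; last first.
    apply/colors_imset; apply: colc; apply/setD1P; split; last exact: rf2_in.
    by rewrite eq_sym; apply: rf12_neq D sf hg'.
  case: (colors_dec (fun y => c (hajos_rename v1 v2 vs y)) e2) => // hn2'.
  have m2 : forall y, y \in e2 -> c (hajos_rename v1 v2 vs y) = c vs.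
    move=> y hy; rewrite (not_colors hn2' hy D.2.2.2.2.2.2.1) /=.
    by rewrite (r2 D hv2) eqxx.
  have hall : forall z, z \in hestar v1 v2 vs e1 e2 b -> c z = c vs.
    move=> z /estar_cases [->//|/andP [/andP [a c1] c2]|/andP [/andP [a c1] c2]].
    - by rewrite -(m1 _ a) /hajos_rename (negbTE c1) (negbTE c2).
    - by rewrite -(m2 _ a) /hajos_rename (negbTE c1) (negbTE c2).
  have hin : hestar v1 v2 vs e1 e2 b \in (hajos_join G1 G2 v1 v2 vs e1 e2 b).2
                :\ hajos_rename v1 v2 vs @: f.
    apply/setD1P; split; last exact: estar_in.
    by rewrite eq_sym; apply: rf1_neq_estar D sf.
  have [x [y [hx hy]]] := colc _ hin.
  by rewrite (hall _ hx) (hall _ hy) eqxx.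
Qed.

Lemma B_noiso1 (T : finType) (G1 G2 : hgraph T) v1 v2 vs e1 e2 b k :
  hajos_data G1 G2 v1 v2 vs e1 e2 -> 0 < k ->
  critical (hajos_join G1 G2 v1 v2 vs e1 e2 b) k -> noiso G1.
Proof.
move=> D k0 hcJ x hx.
have D' := data_sym D.
have [hv1 _ hvs s1 _] := dfacts D; have [hv2 _ _ s2 _] := dfacts D'.
have [_ _ niJ] := (crit_char (join_hyp b D) k0).1 hcJ.
case: (eqVneq x v1) => [->|xv]; first by exists e1; [exact: D.2.2.2.1 | exact: D.2.2.2.2.2.1].
have rx : hajos_rename v1 v2 vs x = x by rewrite (r1 D hx) (negbTE xv).
have hxJ : x \in (hajos_join G1 G2 v1 v2 vs e1 e2 b).1 by rewrite -[x]rx; apply: rV1.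
have [e he hxe] := niJ x hxJ.
move: he hxe; rewrite join_edgeE => /orP [/imsetP [g hg ->]|/orP [/imsetP [g hg ->]|/eqP ->]] hxe.
- move/setD1P: hg => [_ hg]; exists g => //.
  case/imsetP: hxe => y hy E.
  have hy1 := subsetP (D.1.1 _ hg) _ hy.
  by rewrite (rinj1 D hx hy1 (etrans rx E)).
- move/setD1P: hg => [_ hg].
  move: (rnotin1 D' (D.2.1.1 _ hg) hx xv); by rewrite -rimset_sym hxe.
- case/estar_cases: hxe => [E|/andP [/andP [a _] _]|/andP [/andP [a _] _]].
  + by move: hvs; rewrite -E !inE xv hx.
  + by exists e1 => //; exact: D.2.2.2.1.
  + by move: (disj12 D hx); rewrite (subsetP s2 _ a).
Qed.

Lemma thm_b1 (T : finType) (G1 G2 : hgraph T) v1 v2 vs e1 e2 b k :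
  hajos_data G1 G2 v1 v2 vs e1 e2 -> 2 < k ->
  critical (hajos_join G1 G2 v1 v2 vs e1 e2 b) k -> critical G1 k.
Proof.
move=> D k2 hcJ; have k0 : 0 < k by apply: leq_trans k2.
apply/(crit_char D.1 k0); split.
- exact: B_noncol1 D k2 hcJ.
- exact: B_ec1 D k2 hcJ.
- exact: B_noiso1 D k0 hcJ.
Qed.

Unset Implicit Arguments.

Theorem theorem9 (T : finType) (G1 G2 : hgraph T) (v1 v2 vs : T)
    (e1 e2 : {set T}) (b : bool) (k : nat) :
  hajos_data G1 G2 v1 v2 vs e1 e2 -> 2 <= k ->
  (critical G1 k -> critical G2 k -> critical (hajos_join G1 G2 v1 v2 vs e1 e2 b) k) /\
  (3 <= k -> critical (hajos_join G1 G2 v1 v2 vs e1 e2 b) k ->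
     critical G1 k /\ critical G2 k).
Proof.
move=> D k1; split; first exact: thm_a.
move=> k2 hcJ; split; first exact: thm_b1 D k2 hcJ.
apply: (thm_b1 (b := b) (data_sym D) k2); by rewrite -join_sym.
Qed.
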